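(* A homeomorphism $f$ of a compact metric space $(X,d)$ has the L-shadowing property if and only if $f$ has the shadowing property and for every $\epsilon>0$ there is $\delta>0$ such that $d(x,y)<\delta$ implies $V^s_\epsilon(x)\cap V^u_\epsilon(y)\neq\emptyset$.
   Context: L-shadowing: for every $\varepsilon>0$ there is $\delta>0$ such that every sequence $(x_k)_{k\in\mathbb{Z}}$ with $d(f(x_k),x_{k+1})\le\delta$ for all $k$ and $d(f(x_k),x_{k+1})\to0$ as $|k|\to\infty$ admits $z$ with $d(f^k(z),x_k)\le\varepsilon$ for all $k$ and $d(f^k(z),x_k)\to0$ as $|k|\to\infty$. Shadowing: for every $\varepsilon>0$ there is $\delta>0$ such that for every sequence $(x_k)_{k\in\mathbb{Z}}$ with $d(f(x_k),x_{k+1})<\delta$ for all $k$ there is $y$ with $d(f^k(y),x_k)<\varepsilon$ for all $k\in\mathbb{Z}$. For $x\in X$, $\epsilon>0$: $W^s_\epsilon(x)=\{y: d(f^n(x),f^n(y))\le\epsilon\ \forall n\ge0\}$, $W^u_\epsilon(x)=\{y: d(f^{-n}(x),f^{-n}(y))\le\epsilon\ \forall n\ge0\}$, $W^s(x)=\{y: d(f^n(x),f^n(y))\to0 \text{ as } n\to+\infty\}$, $W^u(x)=\{y: d(f^{-n}(x),f^{-n}(y))\to0 \text{ as } n\to+\infty\}$, $V^s_\epsilon(x)=W^s(x)\cap W^s_\epsilon(x)$, $V^u_\epsilon(x)=W^u(x)\cap W^u_\epsilon(x)$. *)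

(* Defs.v *)
From Stdlib Require Import Reals ZArith List.
Open Scope R_scope.

Section Defs.
Context {X : Type} (d : X -> X -> R).

Definition is_metric : Prop :=
  (forall x y, 0 <= d x y) /\
  (forall x y, d x y = 0 <-> x = y) /\
  (forall x y, d x y = d y x) /\
  (forall x y z, d x z <= d x y + d y z).

Definition open_set (U : X -> Prop) : Prop :=
  forall x, U x -> exists r, r > 0 /\ forall y, d x y < r -> U y.

Definition compact_space : Prop :=
  forall (I : Type) (U : I -> X -> Prop),
    (forall i, open_set (U i)) ->
    (forall x, exists i, U i x) ->
    exists l : list I, forall x, exists i, In i l /\ U i x.

Definition continuous_map (h : X -> X) : Prop :=
  forall x eps, eps > 0 -> exists delta, delta > 0 /\
    forall y, d x y < delta -> d (h x) (h y) < eps.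

Definition homeo_with_inverse (f g : X -> X) : Prop :=
  (forall x, g (f x) = x) /\ (forall x, f (g x) = x) /\
  continuous_map f /\ continuous_map g.

Definition fpow (f g : X -> X) (k : Z) (x : X) : X :=
  match k with
  | Z0 => x
  | Zpos p => Nat.iter (Pos.to_nat p) f x
  | Zneg p => Nat.iter (Pos.to_nat p) g x
  end.

Definition tends_to_0_Z (a : Z -> R) : Prop :=
  forall eps, eps > 0 -> exists N : nat,
    forall k : Z, (Z.of_nat N <= Z.abs k)%Z -> Rabs (a k) < eps.

Definition shadowing (f g : X -> X) : Prop :=
  forall eps, eps > 0 -> exists delta, delta > 0 /\
    forall xs : Z -> X,
      (forall k, d (f (xs k)) (xs (k + 1)%Z) < delta) ->
      exists y, forall k, d (fpow f g k y) (xs k) < eps.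

Definition L_shadowing (f g : X -> X) : Prop :=
  forall eps, eps > 0 -> exists delta, delta > 0 /\
    forall xs : Z -> X,
      (forall k, d (f (xs k)) (xs (k + 1)%Z) <= delta) ->
      tends_to_0_Z (fun k => d (f (xs k)) (xs (k + 1)%Z)) ->
      exists z, (forall k, d (fpow f g k z) (xs k) <= eps) /\
                tends_to_0_Z (fun k => d (fpow f g k z) (xs k)).

(* local / global stable and unstable sets; y is a member of the set of x *)
Definition Ws_eps (f : X -> X) (eps : R) (x y : X) : Prop :=
  forall n : nat, d (Nat.iter n f x) (Nat.iter n f y) <= eps.
Definition Wu_eps (g : X -> X) (eps : R) (x y : X) : Prop :=
  forall n : nat, d (Nat.iter n g x) (Nat.iter n g y) <= eps.
Definition Ws (f : X -> X) (x y : X) : Prop :=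
  forall e, e > 0 -> exists N : nat, forall n, (N <= n)%nat ->
    d (Nat.iter n f x) (Nat.iter n f y) < e.
Definition Wu (g : X -> X) (x y : X) : Prop :=
  forall e, e > 0 -> exists N : nat, forall n, (N <= n)%nat ->
    d (Nat.iter n g x) (Nat.iter n g y) < e.
Definition Vs_eps (f : X -> X) (eps : R) (x y : X) : Prop :=
  Ws f x y /\ Ws_eps f eps x y.
Definition Vu_eps (g : X -> X) (eps : R) (x y : X) : Prop :=
  Wu g x y /\ Wu_eps g eps x y.

End Defs.

(* Main.v *)
Require Import Defs.
From Stdlib Require Import Reals ZArith List Lra Lia Classical IndefiniteDescription.
Open Scope R_scope.

Lemma met_refl {X} (d : X -> X -> R) : is_metric d -> forall x, d x x = 0.
Proof. intros (H1&H2&H3&H4) x. apply H2; reflexivity. Qed.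
Lemma met_sym {X} (d : X -> X -> R) : is_metric d -> forall x y, d x y = d y x.
Proof. intros (H1&H2&H3&H4). auto. Qed.
Lemma met_tri {X} (d : X -> X -> R) : is_metric d -> forall x y z, d x z <= d x y + d y z.
Proof. intros (H1&H2&H3&H4). auto. Qed.
Lemma met_pos {X} (d : X -> X -> R) : is_metric d -> forall x y, 0 <= d x y.
Proof. intros (H1&H2&H3&H4). auto. Qed.


Lemma fpow_nat {X : Type} (f g : X -> X) n x : fpow f g (Z.of_nat n) x = Nat.iter n f x.
Proof. destruct n; simpl; auto. rewrite SuccNat2Pos.id_succ. reflexivity. Qed.
Lemma fpow_negnat {X : Type} (f g : X -> X) n x : fpow f g (- Z.of_nat n) x = Nat.iter n g x.
Proof. destruct n; simpl; auto. rewrite SuccNat2Pos.id_succ. reflexivity. Qed.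

Lemma Z_cases (k : Z) : exists n, k = Z.of_nat n \/ k = (- Z.of_nat n)%Z.
Proof. exists (Z.abs_nat k). lia. Qed.

Lemma fpow_succ {X : Type} (f g : X -> X) (gf : forall x, g (f x) = x) (fg : forall x, f (g x) = x) k x : fpow f g (Z.succ k) x = f (fpow f g k x).
Proof.
  destruct (Z_cases k) as [n [-> | ->]].
  - rewrite <- Nat2Z.inj_succ, !fpow_nat. reflexivity.
  - destruct n as [|m].
    + simpl. reflexivity.
    + replace (Z.succ (- Z.of_nat (S m))) with (- Z.of_nat m)%Z by lia.
      rewrite !fpow_negnat. simpl. rewrite fg. reflexivity.
Qed.

Lemma fpow_pred {X : Type} (f g : X -> X) (gf : forall x, g (f x) = x) (fg : forall x, f (g x) = x) k x : fpow f g (Z.pred k) x = g (fpow f g k x).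
Proof.
  rewrite <- (Z.succ_pred k) at 2. rewrite (fpow_succ f g gf fg), gf. reflexivity.
Qed.

Lemma fpow_add {X : Type} (f g : X -> X) (gf : forall x, g (f x) = x) (fg : forall x, f (g x) = x) a b x : fpow f g (a + b) x = fpow f g a (fpow f g b x).
Proof.
  revert x. induction a using Z.peano_ind; intros x.
  - reflexivity.
  - rewrite Z.add_succ_l, !(fpow_succ f g gf fg), IHa. reflexivity.
  - rewrite Z.add_pred_l, !(fpow_pred f g gf fg), IHa. reflexivity.
Qed.

Lemma fpow_ge {X : Type} (f g : X -> X) k y : (0 <= k)%Z -> fpow f g k y = Nat.iter (Z.to_nat k) f y.
Proof. intros. rewrite <- (fpow_nat f g), Z2Nat.id; auto. Qed.
Lemma fpow_le {X : Type} (f g : X -> X) k y : (k <= 0)%Z -> fpow f g k y = Nat.iter (Z.to_nat (- k)) g y.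
Proof. intros. rewrite <- (fpow_negnat f g), Z2Nat.id by lia. rewrite Z.opp_involutive. auto. Qed.


Lemma cont_comp {X} (d : X -> X -> R) (h1 h2 : X -> X) :
  continuous_map d h1 -> continuous_map d h2 -> continuous_map d (fun x => h1 (h2 x)).
Proof.
  intros C1 C2 x eps He.
  destruct (C1 (h2 x) eps He) as (d1 & Hd1 & H1).
  destruct (C2 x d1 Hd1) as (d2 & Hd2 & H2).
  exists d2. split; auto.
Qed.

Lemma cont_ext {X} (d : X -> X -> R) (h1 h2 : X -> X) :
  (forall x, h1 x = h2 x) -> continuous_map d h1 -> continuous_map d h2.
Proof.
  intros E C x eps He. destruct (C x eps He) as (d1 & Hd1 & H1).
  exists d1. split; auto. intros y Hy. rewrite <- !E. auto.
Qed.

Lemma fpow_cont {X} (d : X -> X -> R) f g : homeo_with_inverse d f g ->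
  forall k, continuous_map d (fpow f g k).
Proof.
  intros (gf & fg & Cf & Cg) k. induction k using Z.peano_ind.
  - intros x eps He. exists eps. split; auto.
  - apply (cont_ext d (fun x => f (fpow f g k x))).
    + intros x. rewrite (fpow_succ f g gf fg); auto.
    + apply cont_comp; auto.
  - apply (cont_ext d (fun x => g (fpow f g k x))).
    + intros x. rewrite (fpow_pred f g gf fg); auto.
    + apply cont_comp; auto.
Qed.

Definition cluster {X} (d : X -> X -> R) (s : nat -> X) (p : X) :=
  forall r, r > 0 -> forall M, exists m, (M <= m)%nat /\ d p (s m) < r.

Lemma fold_max_ge {A} (h : A -> nat) (l : list A) i :
  In i l -> (h i <= fold_right (fun j acc => Nat.max (h j) acc) 0%nat l)%nat.
Proof.
  induction l; simpl; [tauto|]. intros [-> | H]; [lia|]. specialize (IHl H). lia.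
Qed.

Lemma compact_cluster {X} (d : X -> X -> R) : is_metric d -> compact_space d ->
  forall s : nat -> X, exists p, cluster d s p.
Proof.
  intros Hm Hc s. apply NNPP. intros Hn.
  set (I := {t : X * R * nat | snd (fst t) > 0 /\
              forall m, (snd t <= m)%nat -> d (fst (fst t)) (s m) >= snd (fst t)}).
  set (U := fun (i : I) y => d (fst (fst (proj1_sig i))) y < snd (fst (proj1_sig i))).
  destruct (Hc I U) as [l Hl].
  - intros i y Hy. unfold U in *. exists (snd (fst (proj1_sig i)) - d (fst (fst (proj1_sig i))) y).
    split; [lra|]. intros z Hz. pose proof (met_tri d Hm (fst (fst (proj1_sig i))) y z). lra.
  - intros x. apply NNPP. intros Hx. apply Hn. exists x. intros r Hr M.
    apply NNPP. intros Hm2. apply Hx.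
    assert (P : snd (fst (x, r, M)) > 0 /\ forall m, (snd (x, r, M) <= m)%nat ->
                 d (fst (fst (x, r, M))) (s m) >= snd (fst (x, r, M))).
    { simpl. split; auto. intros m Hmm. apply Rnot_lt_ge. intros Hlt. apply Hm2. eauto. }
    exists (exist _ (x, r, M) P). unfold U. simpl. rewrite met_refl; auto.
  - set (Ms := fold_right (fun (j : I) acc => Nat.max (snd (proj1_sig j)) acc) 0%nat l).
    destruct (Hl (s Ms)) as (i & Hi & Ui).
    pose proof (fold_max_ge (fun j : I => snd (proj1_sig j)) l i Hi) as Hle.
    unfold U in Ui. destruct (proj2_sig i) as [Hr HM].
    specialize (HM Ms Hle). simpl in *. lra.
Qed.

Lemma cluster_bound {X} (d : X -> X -> R) (s : nat -> X) p y B (G : X -> X) :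
  is_metric d -> continuous_map d G -> cluster d s p ->
  (exists J, forall j, (J <= j)%nat -> d (G (s j)) y <= B) -> d (G p) y <= B.
Proof.
  intros Hm CG Hcl [J HJ].
  destruct (Rle_or_lt (d (G p) y) B) as [|Hlt]; auto. exfalso.
  destruct (CG p (d (G p) y - B)) as (r & Hr & Hc); [lra|].
  destruct (Hcl r Hr J) as (m & HmJ & Hdm).
  specialize (Hc _ Hdm). specialize (HJ m HmJ).
  pose proof (met_tri d Hm (G p) (G (s m)) y). lra.
Qed.

Definition asym {X} (d : X -> X -> R) (F : Z -> X -> X) a b :=
  forall e, e > 0 -> exists K, forall k, (K <= k)%Z -> d (F k a) (F k b) < e.

Definition ProdAt {X} (d : X -> X -> R) (F : Z -> X -> X) eta delta :=
  forall m a b, d (F m a) (F m b) < delta -> exists w,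
  (forall k, (m <= k)%Z -> d (F k a) (F k w) <= eta) /\ asym d F a w /\
  (forall k, (k <= m)%Z -> d (F k b) (F k w) <= eta) /\
  (forall e, e > 0 -> exists K, forall k, (k <= K)%Z -> d (F k b) (F k w) < e).

Definition ProdP {X} (d : X -> X -> R) (F : Z -> X -> X) :=
  forall eta, eta > 0 -> exists delta, delta > 0 /\ ProdAt d F eta delta.

Record st (X : Type) := mkst { sp : X; sq : X; sN : Z }.
Arguments mkst {X}. Arguments sp {X}. Arguments sq {X}. Arguments sN {X}.

Fixpoint iter_st {T} (step : nat -> T -> T) (s0 : T) (n : nat) : T :=
  match n with O => s0 | S n' => step n' (iter_st step s0 n') end.

Lemma pow2_ge n : 1 + INR n <= 2 ^ n.
Proof.
  induction n. simpl; lra. rewrite S_INR. simpl. pose proof (pos_INR n). lra.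
Qed.

Lemma forward {X} (d : X -> X -> R) (F : Z -> X -> X) :
  is_metric d -> (forall s : nat -> X, exists p, cluster d s p) ->
  (forall k, continuous_map d (F k)) -> ProdP d F ->
  forall c1, c1 > 0 -> exists c0, c0 > 0 /\ c0 <= c1 /\
  forall x : Z -> X,
    (forall al, al > 0 -> exists N q, forall k, (N <= k)%Z -> d (F k q) (x k) < al) ->
    forall p0, (forall k, d (F k p0) (x k) < c0) ->
    exists p, (forall k, d (F k p) (x k) <= 2 * c1) /\
      (forall e, e > 0 -> exists K, forall k, (K <= k)%Z -> d (F k p) (x k) < e).
Proof.
  intros Hm Hcl Hc HP c1 Hc1.
  pose proof (met_sym d Hm) as Sym. pose proof (met_tri d Hm) as Tri.
  pose proof (met_refl d Hm) as Refl. pose proof (met_pos d Hm) as Pos.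
  assert (HD : exists D : R -> R, forall eta, eta > 0 -> D eta > 0 /\ ProdAt d F eta (D eta)).
  { apply (functional_choice (fun eta delta => eta > 0 -> delta > 0 /\ ProdAt d F eta delta)).
    intros eta. destruct (Rlt_or_le 0 eta) as [H|H].
    - destruct (HP eta H) as [delta Hd]. exists delta. auto.
    - exists 0. intros; lra. }
  destruct HD as [D HD].
  set (eta := fun j : nat => c1 / 2 ^ (S j)).
  assert (eta_pos : forall j, eta j > 0).
  { intros j. unfold eta. apply Rdiv_lt_0_compat; auto. apply pow_lt; lra. }
  assert (eta_S : forall j, eta (S j) = eta j / 2).
  { intros j. unfold eta. pose proof (pow_lt 2 j). simpl. field. lra. }
  assert (eta_0 : eta 0%nat = c1 / 2). { unfold eta; simpl; field. }
  assert (eta_le : forall i j, (i <= j)%nat -> eta j <= eta i).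
  { intros i j Hij. induction Hij. lra. rewrite eta_S. pose proof (eta_pos m). lra. }
  assert (eta_small : forall e, e > 0 -> exists i, 5 * eta i < e).
  { intros e He. destruct (INR_archimed e (5 * c1)) as [n Hn]; auto.
    exists n. unfold eta. pose proof (pow2_ge (S n)) as P. rewrite S_INR in P.
    pose proof (pow_lt 2 (S n)).
    assert (5 * (c1 / 2 ^ S n) * 2 ^ S n = 5 * c1) by (field; lra).
    assert (e * 2 ^ S n > 5 * c1) by nra.
    apply (Rmult_lt_reg_r (2 ^ S n)); lra. }
  set (dl := fun j => D (eta j)).
  assert (dl_pos : forall j, dl j > 0). { intros j. apply (HD _ (eta_pos j)). }
  set (c0 := Rmin c1 (dl 0%nat / 4)).
  assert (c0_pos : c0 > 0). { unfold c0. apply Rmin_glb_lt; auto. pose proof (dl_pos 0%nat). lra. }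
  assert (c0_c1 : c0 <= c1) by apply Rmin_l.
  assert (c0_dl : c0 <= dl 0%nat / 4) by apply Rmin_r.
  exists c0. split; [auto|]. split; [auto|].
  intros x Htail p0 Hp0.
  assert (HT : exists T : R -> Z * X, forall al, al > 0 -> forall k, (fst (T al) <= k)%Z ->
            d (F k (snd (T al))) (x k) < al).
  { apply (functional_choice (fun al t => al > 0 -> forall k, (fst t <= k)%Z -> d (F k (snd t)) (x k) < al)).
    intros al. destruct (Rlt_or_le 0 al) as [H|H].
    - destruct (Htail al H) as (N & q & Hq). exists (N, q). simpl. auto.
    - exists (0%Z, p0). intros; lra. }
  destruct HT as [T HT].
  set (alpha := fun j : nat => match j with O => c0 | S j' =>
          Rmin (Rmin (eta j) c0) (Rmin (dl j') (dl j) / 4) end).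
  assert (alpha_pos : forall j, alpha j > 0).
  { intros [|j]; [simpl; auto|]. 
    assert (Rmin (dl j) (dl (S j)) > 0) by (apply Rmin_glb_lt; apply dl_pos).
    simpl. apply Rmin_glb_lt; [apply Rmin_glb_lt; [apply eta_pos|auto]|]. lra. }
  assert (alpha_S1 : forall j, alpha (S j) <= dl j / 4).
  { intros j. simpl. eapply Rle_trans; [apply Rmin_r|].
    pose proof (Rmin_l (dl j) (dl (S j))). lra. }
  assert (alpha_le : forall j, alpha j <= dl j / 4).
  { intros [|j]; simpl; auto. eapply Rle_trans; [apply Rmin_r|].
    pose proof (Rmin_r (dl j) (dl (S j))). lra. }
  assert (alpha_eta : forall j, alpha (S j) <= eta (S j)).
  { intros j. simpl. eapply Rle_trans; [apply Rmin_l|]. apply Rmin_l. }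
  assert (alpha_c0 : forall j, alpha (S j) <= c0).
  { intros j. simpl. eapply Rle_trans; [apply Rmin_l|]. apply Rmin_r. }
  set (Pre := fun j (s : st X) => (forall k, (sN s <= k)%Z -> d (F k (sq s)) (x k) < alpha j)
                                  /\ asym d F (sq s) (sp s)).
  set (Rel := fun j (s s' : st X) => (sN s <= sN s')%Z /\
     (forall k, (sN s' <= k)%Z -> d (F k (sq s')) (x k) < alpha (S j)) /\
     asym d F (sq s') (sp s') /\
     (forall k, (k <= sN s')%Z -> d (F k (sp s)) (F k (sp s')) <= eta j) /\
     (forall k, (sN s' <= k)%Z -> d (F k (sq s')) (F k (sp s')) <= eta j)).
  assert (Hstep : exists step : nat * st X -> st X, forall j s, Pre j s -> Rel j s (step (j, s))).
  { assert (E: forall js : nat * st X, exists s', Pre (fst js) (snd js) -> Rel (fst js) (snd js) s').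
    { intros [j s]. simpl. destruct (classic (Pre j s)) as [Hp|Hp]; [|exists s; tauto].
      destruct Hp as [HQ HA].
      destruct (HD (eta j) (eta_pos j)) as [Hdp Hpr]. fold (dl j) in Hdp, Hpr.
      destruct (HA (dl j / 4)) as [K HK]; [lra|].
      set (al := alpha (S j)).
      set (m := Z.max (sN s) (Z.max (fst (T al)) K)).
      assert (Hd: d (F m (snd (T al))) (F m (sp s)) < dl j).
      { assert (A1 := HT al (alpha_pos (S j)) m ltac:(unfold m; lia)).
        assert (A2 := HQ m ltac:(unfold m; lia)).
        assert (A3 := HK m ltac:(unfold m; lia)).
        pose proof (Tri (F m (snd (T al))) (x m) (F m (sp s))).
        pose proof (Tri (x m) (F m (sq s)) (F m (sp s))).
        rewrite (Sym (x m) (F m (sq s))) in H0.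
        pose proof (alpha_S1 j). pose proof (alpha_le j). fold al in H1. lra. }
      destruct (Hpr m _ _ Hd) as (w & H1 & H2 & H3 & H4).
      exists (mkst w (snd (T al)) m). intros _. unfold Rel; simpl.
      split; [unfold m; lia|]. split.
      { intros k Hk. apply (HT al (alpha_pos (S j))). unfold m in Hk; lia. }
      split; auto. }
    apply functional_choice in E. destruct E as [step Hs]. exists step. intros j s. apply (Hs (j, s)). }
  destruct Hstep as [step Hstep].
  set (seq := iter_st (fun j s => step (j, s)) (mkst p0 p0 0%Z)).
  assert (Inv : forall j, Pre j (seq j) /\
     (forall k, d (F k (sp (seq j))) (x k) <= c0 + c1 - 2 * eta j) /\
     (forall i, (i <= j)%nat -> (sN (seq i) <= sN (seq j))%Z /\
        forall k, (sN (seq i) <= k)%Z -> d (F k (sp (seq j))) (x k) <= 5 * eta i - 2 * eta j)).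
  { induction j.
    - change (seq 0%nat) with (mkst p0 p0 0%Z). simpl. split; [split|split].
      + intros k _. apply Hp0.
      + intros e He. exists 0%Z. intros k _. rewrite Refl. auto.
      + intros k. rewrite eta_0. pose proof (Hp0 k). lra.
      + intros i Hi. replace i with 0%nat by lia. change (seq 0%nat) with (mkst p0 p0 0%Z); simpl. split; [lia|]. intros k _.
        rewrite eta_0. pose proof (Hp0 k). change (seq 0%nat) with (mkst p0 p0 0%Z); simpl. lra.
    - destruct IHj as (Hpre & HG & HTl).
      pose proof (Hstep j (seq j) Hpre) as (R1&R2&R3&R4&R5).
      change (seq (S j)) with (step (j, seq j)).
      set (s' := step (j, seq j)) in *.
      assert (Hnew : forall k, (sN s' <= k)%Z -> d (F k (sp s')) (x k) <= eta j + alpha (S j)).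
      { intros k Hk. pose proof (R2 k Hk) as A1. pose proof (R5 k Hk) as A2.
        pose proof (Tri (F k (sp s')) (F k (sq s')) (x k)) as A3. rewrite (Sym (F k (sp s')) (F k _)) in A3. lra. }
      assert (Hold : forall k, (k <= sN s')%Z -> d (F k (sp s')) (x k) <= eta j + d (F k (sp (seq j))) (x k)).
      { intros k Hk. pose proof (R4 k Hk) as A1.
        pose proof (Tri (F k (sp s')) (F k (sp (seq j))) (x k)) as A3. rewrite (Sym (F k (sp s')) (F k _)) in A3. lra. }
      pose proof (eta_S j) as ES. pose proof (alpha_eta j). pose proof (alpha_c0 j).
      pose proof (eta_pos j). assert (eta j <= c1 / 2) by (rewrite <- eta_0; apply eta_le; lia).
      split; [split|split].
      + exact R2.
      + exact R3.
      + intros k. destruct (Z.le_ge_cases k (sN s')) as [Hk|Hk].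
        * pose proof (Hold k Hk). pose proof (HG k). lra.
        * pose proof (Hnew k Hk). lra.
      + intros i Hi. apply Nat.le_succ_r in Hi. destruct Hi as [Hi|Hi].
        * destruct (HTl i Hi) as [HN HB]. split; [lia|]. intros k Hk.
          pose proof (eta_le i j Hi).
          destruct (Z.le_ge_cases k (sN s')) as [Hk'|Hk'].
          -- pose proof (Hold k Hk'). pose proof (HB k Hk). lra.
          -- pose proof (Hnew k Hk'). lra.
        * subst i. change (seq (S j)) with s'. split; [lia|]. intros k Hk.
          pose proof (Hnew k Hk). lra. }
  destruct (Hcl (fun j => sp (seq j))) as [p Hp].
  exists p. split.
  - intros k. assert (d (F k p) (x k) <= c0 + c1); [|lra].
    apply (cluster_bound d (fun j => sp (seq j)) p (x k) _ (F k) Hm (Hc k) Hp).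
    exists 0%nat. intros j _. destruct (Inv j) as (_ & HG & _). pose proof (HG k). pose proof (eta_pos j). lra.
  - intros e He. destruct (eta_small e He) as [i Hi]. exists (sN (seq i)). intros k Hk.
    assert (d (F k p) (x k) <= 5 * eta i); [|lra].
    apply (cluster_bound d (fun j => sp (seq j)) p (x k) _ (F k) Hm (Hc k) Hp).
    exists i. intros j Hj. destruct (Inv j) as (_ & _ & HTl). destruct (HTl i Hj) as [_ HB].
    pose proof (HB k Hk). pose proof (eta_pos j). lra.
Qed.

Lemma ProdP_rev {X} (d : X -> X -> R) (F : Z -> X -> X) :
  is_metric d -> ProdP d F -> ProdP d (fun k => F (- k)%Z).
Proof.
  intros Hm HP eta He. destruct (HP eta He) as (delta & Hd & Hpr).
  exists delta. split; auto. intros m a b Hab.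
  destruct (Hpr (- m)%Z b a) as (w & H1 & H2 & H3 & H4).
  { rewrite met_sym; auto. }
  exists w. split; [|split; [|split]].
  - intros k Hk. apply H3. lia.
  - intros e Hee. destruct (H4 e Hee) as [K HK]. exists (- K)%Z. intros k Hk. apply HK. lia.
  - intros k Hk. apply H1. lia.
  - intros e Hee. destruct (H2 e Hee) as [K HK]. exists (- K)%Z. intros k Hk. apply HK. lia.
Qed.

Lemma ProdP_fpow {X} (d : X -> X -> R) (f g : X -> X) :
  is_metric d -> (forall x, g (f x) = x) -> (forall x, f (g x) = x) ->
  (forall eps, eps > 0 -> exists delta, delta > 0 /\
     forall x y, d x y < delta -> exists z, Vs_eps d f eps x z /\ Vu_eps d g eps y z) ->
  ProdP d (fpow f g).
Proof.
  intros Hm gf fg HPC eta He. destruct (HPC eta He) as (delta & Hd & Hpr).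
  exists delta. split; auto. intros m a b Hab.
  destruct (Hpr _ _ Hab) as (z & [Ws We] & [Wu Wue]).
  exists (fpow f g (- m) z).
  assert (E1 : forall k c, fpow f g k c = fpow f g (k - m) (fpow f g m c)).
  { intros k c. rewrite <- (fpow_add f g gf fg). f_equal. lia. }
  assert (E2 : forall k, fpow f g k (fpow f g (- m) z) = fpow f g (k - m) z).
  { intros k. rewrite <- (fpow_add f g gf fg). f_equal. }
  split; [|split; [|split]].
  - intros k Hk. rewrite E1, E2, (fpow_ge f g (k - m) z), (fpow_ge f g (k - m) (fpow f g m a)) by lia. apply We.
  - intros e Hee. destruct (Ws e Hee) as [N HN]. exists (m + Z.of_nat N)%Z.
    intros k Hk. rewrite E1, E2, (fpow_ge f g (k - m) z), (fpow_ge f g (k - m) (fpow f g m a)) by lia. apply HN. lia.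
  - intros k Hk. rewrite (E1 k b), E2, (fpow_le f g (k - m) z), (fpow_le f g (k - m) (fpow f g m b)) by lia. apply Wue.
  - intros e Hee. destruct (Wu e Hee) as [N HN]. exists (m - Z.of_nat N)%Z.
    intros k Hk. rewrite (E1 k b), E2, (fpow_le f g (k - m) z), (fpow_le f g (k - m) (fpow f g m b)) by lia. apply HN. lia.
Qed.

Lemma cut_jump {X} (d : X -> X -> R) (f g : X -> X) :
  is_metric d -> (forall x, g (f x) = x) -> (forall x, f (g x) = x) ->
  forall (x : Z -> X) (c : Z -> Z),
  (forall k, c (k + 1)%Z = c k \/ (c k = k /\ c (k + 1)%Z = (k + 1)%Z)) ->
  forall k,
  d (f (fpow f g (k - c k) (x (c k)))) (fpow f g (k + 1 - c (k + 1)%Z)%Z (x (c (k + 1)%Z))) = 0 \/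
  (c k = k /\ d (f (fpow f g (k - c k) (x (c k)))) (fpow f g (k + 1 - c (k + 1)%Z)%Z (x (c (k + 1)%Z)))
        = d (f (x k)) (x (k + 1)%Z)).
Proof.
  intros Hm gf fg x c Hc k. destruct (Hc k) as [E | [E1 E2]].
  - left. rewrite E. replace (k + 1 - c k)%Z with (Z.succ (k - c k)) by lia.
    rewrite (fpow_succ f g gf fg). apply met_refl; auto.
  - right. split; auto. rewrite E1, E2, !Z.sub_diag. reflexivity.
Qed.

Lemma cut_id {X} (f g : X -> X) (x : Z -> X) (c : Z -> Z) k :
  c k = k -> fpow f g (k - c k) (x (c k)) = x k.
Proof. intros E. rewrite E, Z.sub_diag. reflexivity. Qed.

Lemma tail_fwd {X} (d : X -> X -> R) (f g : X -> X) :
  is_metric d -> (forall x, g (f x) = x) -> (forall x, f (g x) = x) ->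
  shadowing d f g -> forall xs : Z -> X,
  tends_to_0_Z (fun k => d (f (xs k)) (xs (k + 1)%Z)) ->
  forall al, al > 0 -> exists N q, forall k, (N <= k)%Z -> d (fpow f g k q) (xs k) < al.
Proof.
  intros Hm gf fg Hsh xs Ht al Hal.
  destruct (Hsh al Hal) as (be & Hbe & Hs).
  destruct (Ht be Hbe) as [Nn HNn].
  set (c := fun k => Z.max (Z.of_nat Nn) k).
  destruct (Hs (fun k => fpow f g (k - c k) (xs (c k)))) as [q Hq].
  - intros k. destruct (cut_jump d f g Hm gf fg xs c ltac:(intros; unfold c; lia) k) as [E | [E1 E2]].
    + rewrite E. auto.
    + rewrite E2. pose proof (HNn k ltac:(unfold c in E1; lia)) as H. simpl in H.
      pose proof (Rle_abs (d (f (xs k)) (xs (k + 1)%Z))). lra.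
  - exists (Z.of_nat Nn), q. intros k Hk. specialize (Hq k).
    rewrite (cut_id f g xs c k) in Hq; auto. unfold c; lia.
Qed.

Lemma tail_bwd {X} (d : X -> X -> R) (f g : X -> X) :
  is_metric d -> (forall x, g (f x) = x) -> (forall x, f (g x) = x) ->
  shadowing d f g -> forall xs : Z -> X,
  tends_to_0_Z (fun k => d (f (xs k)) (xs (k + 1)%Z)) ->
  forall al, al > 0 -> exists N q, forall k, (N <= k)%Z ->
     d (fpow f g (- k) q) (xs (- k)%Z) < al.
Proof.
  intros Hm gf fg Hsh xs Ht al Hal.
  destruct (Hsh al Hal) as (be & Hbe & Hs).
  destruct (Ht be Hbe) as [Nn HNn].
  set (c := fun k => Z.min (- Z.of_nat Nn) k).
  destruct (Hs (fun k => fpow f g (k - c k) (xs (c k)))) as [q Hq].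
  - intros k. destruct (cut_jump d f g Hm gf fg xs c ltac:(intros; unfold c; lia) k) as [E | [E1 E2]].
    + rewrite E. auto.
    + rewrite E2. pose proof (HNn k ltac:(unfold c in E1, E2; lia)) as H. simpl in H.
      pose proof (Rle_abs (d (f (xs k)) (xs (k + 1)%Z))). lra.
  - exists (Z.of_nat Nn), q. intros k Hk. specialize (Hq (- k)%Z).
    rewrite (cut_id f g xs c (- k)%Z) in Hq; auto. unfold c; lia.
Qed.

Lemma L_to_shadow {X} (d : X -> X -> R) (f g : X -> X) :
  is_metric d -> compact_space d -> homeo_with_inverse d f g ->
  L_shadowing d f g -> shadowing d f g.
Proof.
  intros Hm Hc Hh HL eps He.
  pose proof Hh as (gf & fg & _ & _).
  destruct (HL (eps / 2)) as (de & Hde & HL'); [lra|].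
  exists de. split; auto. intros xs Hj.
  set (c := fun (n : nat) k => Z.max (- Z.of_nat n) (Z.min (Z.of_nat n) k)).
  set (ys := fun n k => fpow f g (k - c n k) (xs (c n k))).
  assert (Hz : forall n, exists z, forall k, d (fpow f g k z) (ys n k) <= eps / 2).
  { intros n.
    assert (Hcc : forall k, c n (k + 1)%Z = c n k \/ (c n k = k /\ c n (k + 1)%Z = (k + 1)%Z))
      by (intros; unfold c; lia).
    destruct (HL' (ys n)) as (z & Hz1 & _).
    - intros k. destruct (cut_jump d f g Hm gf fg xs (c n) Hcc k) as [E | [E1 E2]].
      + unfold ys. rewrite E. lra.
      + unfold ys. rewrite E2. left. apply Hj.
    - intros e' He'. exists (S n). intros k Hk.
      destruct (cut_jump d f g Hm gf fg xs (c n) Hcc k) as [E | [E1 E2]].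
      + simpl. unfold ys. rewrite E, Rabs_R0. auto.
      + exfalso. unfold c in E1. lia.
    - exists z. exact Hz1. }
  apply functional_choice in Hz. destruct Hz as [zs Hzs].
  destruct (compact_cluster d Hm Hc zs) as [p Hp].
  exists p. intros k.
  assert (d (fpow f g k p) (xs k) <= eps / 2); [|lra].
  apply (cluster_bound d zs p (xs k) _ (fpow f g k) Hm (fpow_cont d f g Hh k) Hp).
  exists (Z.abs_nat k). intros j Hj'. specialize (Hzs j k).
  unfold ys in Hzs. rewrite cut_id in Hzs; auto. unfold c. lia.
Qed.

Lemma L_to_prod {X} (d : X -> X -> R) (f g : X -> X) :
  is_metric d -> homeo_with_inverse d f g ->
  L_shadowing d f g -> forall eps, eps > 0 -> exists delta, delta > 0 /\
     forall x y, d x y < delta ->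
       exists z, Vs_eps d f eps x z /\ Vu_eps d g eps y z.
Proof.
  intros Hm Hh HL eps He.
  pose proof Hh as (gf & fg & _ & _).
  pose proof (met_sym d Hm) as Sym. pose proof (met_tri d Hm) as Tri.
  pose proof (met_refl d Hm) as Refl. pose proof (met_pos d Hm) as Pos.
  destruct (HL (eps / 2)) as (de & Hde & HL'); [lra|].
  exists (Rmin de (eps / 2)). split.
  { apply Rmin_glb_lt; lra. }
  intros x y Hxy.
  pose proof (Rmin_l de (eps/2)). pose proof (Rmin_r de (eps/2)).
  set (xs := fun k => if (0 <=? k)%Z then fpow f g k x else fpow f g k y).
  assert (J : forall k, k <> (-1)%Z -> d (f (xs k)) (xs (k + 1)%Z) = 0).
  { intros k Hk. unfold xs.
    destruct (Z.leb_spec 0 k); destruct (Z.leb_spec 0 (k + 1)); try lia;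
    rewrite Z.add_1_r, (fpow_succ f g gf fg); apply Refl. }
  assert (J1 : d (f (xs (-1)%Z)) (xs ((-1) + 1)%Z) = d y x).
  { unfold xs. simpl. rewrite fg. reflexivity. }
  destruct (HL' xs) as (z & Hz1 & Hz2).
  - intros k. destruct (Z.eq_dec k (-1)) as [->|Hk].
    + rewrite J1, Sym. lra.
    + rewrite (J k Hk). lra.
  - intros e' He'. exists 2%nat. intros k Hk. rewrite J by lia. rewrite Rabs_R0. auto.
  - exists z. split; split.
    + intros e' He'. destruct (Hz2 e' He') as [N HN]. exists N. intros n Hn.
      specialize (HN (Z.of_nat n) ltac:(lia)).
      rewrite Rabs_pos_eq in HN by apply Pos.
      unfold xs in HN. replace (0 <=? Z.of_nat n)%Z with true in HN by (symmetry; apply Z.leb_le; lia).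
      rewrite !(fpow_nat f g) in HN. rewrite Sym. auto.
    + intros n. specialize (Hz1 (Z.of_nat n)).
      unfold xs in Hz1. replace (0 <=? Z.of_nat n)%Z with true in Hz1 by (symmetry; apply Z.leb_le; lia).
      rewrite !(fpow_nat f g) in Hz1. rewrite Sym. lra.
    + intros e' He'. destruct (Hz2 e' He') as [N HN]. exists (S N). intros n Hn.
      specialize (HN (- Z.of_nat n)%Z ltac:(lia)).
      rewrite Rabs_pos_eq in HN by apply Pos.
      unfold xs in HN. replace (0 <=? - Z.of_nat n)%Z with false in HN by (symmetry; apply Z.leb_gt; lia).
      rewrite !(fpow_negnat f g) in HN. rewrite Sym. auto.
    + intros n. destruct n as [|n].
      * simpl. specialize (Hz1 0%Z). unfold xs in Hz1. simpl in Hz1.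
        pose proof (Tri y x z) as T1. rewrite (Sym x z), (Sym y x) in T1. lra.
      * specialize (Hz1 (- Z.of_nat (S n))%Z).
        unfold xs in Hz1. replace (0 <=? - Z.of_nat (S n))%Z with false in Hz1 by (symmetry; apply Z.leb_gt; lia).
        rewrite !(fpow_negnat f g) in Hz1. rewrite Sym. lra.
Qed.

Lemma to_L {X} (d : X -> X -> R) (f g : X -> X) :
  is_metric d -> compact_space d -> homeo_with_inverse d f g ->
  shadowing d f g ->
  (forall eps, eps > 0 -> exists delta, delta > 0 /\
     forall x y, d x y < delta -> exists z, Vs_eps d f eps x z /\ Vu_eps d g eps y z) ->
  L_shadowing d f g.
Proof.
  intros Hm Hc Hh Hsh HPC eps He.
  pose proof Hh as (gf & fg & _ & _).
  pose proof (met_sym d Hm) as Sym. pose proof (met_tri d Hm) as Tri.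
  pose proof (met_pos d Hm) as Pos.
  pose proof (ProdP_fpow d f g Hm gf fg HPC) as PF.
  pose proof (ProdP_rev d _ Hm PF) as PB.
  pose proof (compact_cluster d Hm Hc) as Hcl.
  destruct (PF (eps / 2)) as (dc & Hdc & Hpc); [lra|].
  set (mu := Rmin (eps / 2) (dc / 4)).
  assert (mu_pos : mu > 0) by (apply Rmin_glb_lt; lra).
  assert (mu1 : mu <= eps / 2) by apply Rmin_l.
  assert (mu2 : mu <= dc / 4) by apply Rmin_r.
  destruct (forward d (fpow f g) Hm Hcl (fpow_cont d f g Hh) PF (mu / 2)) as (c0f & Hc0f & _ & Ff); [lra|].
  destruct (forward d (fun k => fpow f g (- k)) Hm Hcl (fun k => fpow_cont d f g Hh (- k)) PB (mu / 2))
    as (c0b & Hc0b & _ & Fb); [lra|].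
  set (c0 := Rmin c0f c0b).
  assert (c0_pos : c0 > 0) by (apply Rmin_glb_lt; lra).
  pose proof (Rmin_l c0f c0b). pose proof (Rmin_r c0f c0b).
  destruct (Hsh c0 c0_pos) as (be & Hbe & Hs).
  exists (be / 2). split; [lra|]. intros xs Hj Ht.
  destruct (Hs xs) as [p0 Hp0].
  { intros k. pose proof (Hj k). lra. }
  destruct (Ff xs (tail_fwd d f g Hm gf fg Hsh xs Ht) p0) as (p & Hp1 & Hp2).
  { intros k. pose proof (Hp0 k). unfold c0 in *. lra. }
  destruct (Fb (fun k => xs (- k)%Z) (tail_bwd d f g Hm gf fg Hsh xs Ht) p0) as (q & Hq1 & Hq2).
  { intros k. pose proof (Hp0 (- k)%Z). unfold c0 in *. lra. }
  destruct (Hpc 0%Z p q) as (w & A1 & A2 & A3 & A4).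
  { simpl. pose proof (Hp1 0%Z) as P1. pose proof (Hq1 0%Z) as Q1. simpl in P1, Q1.
    pose proof (Tri p (xs 0%Z) q). rewrite (Sym (xs 0%Z) q) in H1. lra. }
  exists w. split.
  - intros k. destruct (Z.le_ge_cases 0 k) as [Hk|Hk].
    + pose proof (A1 k Hk). pose proof (Hp1 k).
      pose proof (Tri (fpow f g k w) (fpow f g k p) (xs k)) as T.
      rewrite (Sym (fpow f g k w) (fpow f g k p)) in T. lra.
    + pose proof (A3 k Hk). pose proof (Hq1 (- k)%Z) as Q. simpl in Q.
      rewrite Z.opp_involutive in Q.
      pose proof (Tri (fpow f g k w) (fpow f g k q) (xs k)) as T.
      rewrite (Sym (fpow f g k w) (fpow f g k q)) in T. lra.
  - intros e Hee.
    destruct (A2 (e / 2)) as [K1 HK1]; [lra|].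
    destruct (Hp2 (e / 2)) as [K2 HK2]; [lra|].
    destruct (A4 (e / 2)) as [K3 HK3]; [lra|].
    destruct (Hq2 (e / 2)) as [K4 HK4]; [lra|].
    set (M := Z.max (Z.max K1 K2) (Z.max (- K3) K4)).
    exists (Z.to_nat M). intros k Hk. rewrite Rabs_pos_eq by apply Pos.
    destruct (Z_le_gt_dec 0 k) as [Hk0|Hk0].
    + assert (Hk' : (M <= k)%Z) by lia.
      pose proof (HK1 k ltac:(unfold M in Hk'; lia)). pose proof (HK2 k ltac:(unfold M in Hk'; lia)).
      pose proof (Tri (fpow f g k w) (fpow f g k p) (xs k)) as T.
      rewrite (Sym (fpow f g k w) (fpow f g k p)) in T. lra.
    + assert (Hk' : (M <= - k)%Z) by lia.
      pose proof (HK3 k ltac:(unfold M in Hk'; lia)). pose proof (HK4 (- k)%Z ltac:(unfold M in Hk'; lia)) as Q.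
      simpl in Q. rewrite Z.opp_involutive in Q.
      pose proof (Tri (fpow f g k w) (fpow f g k q) (xs k)) as T.
      rewrite (Sym (fpow f g k w) (fpow f g k q)) in T. lra.
Qed.

Theorem theoremD (X : Type) (d : X -> X -> R) (f g : X -> X)
  (Hmet : is_metric d) (Hcpt : compact_space d)
  (Hhom : homeo_with_inverse d f g) :
  L_shadowing d f g <->
  (shadowing d f g /\
   forall eps, eps > 0 -> exists delta, delta > 0 /\
     forall x y, d x y < delta ->
       exists z, Vs_eps d f eps x z /\ Vu_eps d g eps y z).
Proof.
  split.
  - intros HL. split.
    + apply L_to_shadow; auto.
    + apply L_to_prod; auto.
  - intros [Hs Hp]. apply to_L; auto.
Qed.
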